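(* Let $\mathfrak g$ be a Lie ring satisfying $\mathrm{ad}(u)\,\mathrm{ad}([u,w])=0$ for all $u,w\in\mathfrak g$. If $\mathfrak g$ is generated by finitely many elements of the form $[x,y]$ with $x,y\in\mathfrak g$, then $\mathfrak g$ is nilpotent.
   Context: For $u\in\mathfrak g$, $\mathrm{ad}(u):\mathfrak g\to\mathfrak g$ is $v\mapsto[v,u]$. Maps are composed left to right: $v\,\mathrm{ad}(u)\mathrm{ad}(w)=[[v,u],w]$. *)

(* Defs.v *)
From mathcomp Require Import all_boot all_algebra.
Set Implicit Arguments. Unset Strict Implicit. Unset Printing Implicit Defensive.
Import GRing.Theory.
Local Open Scope ring_scope.

Definition is_lie_ring (L : zmodType) (br : L -> L -> L) : Prop :=
  [/\ (forall x y z, br (x + y) z = br x z + br y z),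
      (forall x y z, br x (y + z) = br x y + br x z),
      (forall x, br x x = 0)
    & (forall x y z, br (br x y) z + br (br y z) x + br (br z x) y = 0)].

Inductive lie_gen (L : zmodType) (br : L -> L -> L) (S : seq L) : L -> Prop :=
| lie_gen_base x : x \in S -> lie_gen br S x
| lie_gen_0 : lie_gen br S 0
| lie_gen_N x : lie_gen br S x -> lie_gen br S (- x)
| lie_gen_D x y : lie_gen br S x -> lie_gen br S y -> lie_gen br S (x + y)
| lie_gen_br x y : lie_gen br S x -> lie_gen br S y -> lie_gen br S (br x y).

Inductive add_span (L : zmodType) (A : L -> Prop) : L -> Prop :=
| add_span_base x : A x -> add_span A x
| add_span_0 : add_span A 0
| add_span_N x : add_span A x -> add_span A (- x)
| add_span_D x y : add_span A x -> add_span A y -> add_span A (x + y).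

Fixpoint lcs (L : zmodType) (br : L -> L -> L) (k : nat) : L -> Prop :=
  match k with
  | 0 => fun _ => True
  | k'.+1 => add_span (fun z => exists a x, lcs br k' a /\ z = br a x)
  end.

Definition lie_nilpotent (L : zmodType) (br : L -> L -> L) : Prop :=
  exists k, forall x, lcs br k x -> x = 0.

(* Main.v *)
Require Import Defs.
From mathcomp Require Import all_boot all_algebra.
Set Implicit Arguments. Unset Strict Implicit. Unset Printing Implicit Defensive.
Import GRing.Theory.
Local Open Scope ring_scope.

Inductive term := V of nat | B of term & term.

Fixpoint den (L : zmodType) (br : L -> L -> L) (env : seq L) (t : term) : L :=
  match t with V i => nth 0 env i | B s u => br (den br env s) (den br env u) end.

Fixpoint ops (t : term) : seq (seq nat) :=
  match t with
  | V i => [:: [:: i]]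
  | B s u => [seq a ++ b | a <- ops s, b <- ops u] ++ [seq b ++ a | b <- ops u, a <- ops s]
  end.

Fixpoint expand (ts : seq term) : seq (seq nat) :=
  match ts with
  | [::] => [:: [::]]
  | t :: ts' => [seq a ++ b | a <- ops t, b <- expand ts']
  end.

Definition app (L : zmodType) (br : L -> L -> L) (v : L) (s : seq L) := foldl br v s.
Definition appw (L : zmodType) (br : L -> L -> L) (env : seq L) (v : L) (w : seq nat) :=
  app br v (map (nth 0 env) w).

Fixpoint cancw (s : seq (seq nat)) : seq (seq nat) :=
  match s with
  | [::] => [::]
  | a :: r => match cancw r with
              | b :: r' => if a == b then r' else a :: b :: r'
              | [::] => [:: a]
              end
  end.

Fixpoint lexle (a b : seq nat) : bool :=
  match a, b with
  | [::], _ => true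
  | _ :: _, [::] => false
  | x :: a', y :: b' => (x < y)%N || ((x == y) && lexle a' b')
  end.

Definition inst_words (c : seq term * term * term * term * seq term) :=
  let: (l, U, T, W, r) := c in
  expand (l ++ U :: B T W :: r) ++ expand (l ++ T :: B U W :: r).

Definition target_ts := [:: V 0; B (V 1) (V 2); B (V 3) (V 4)].
Definition cert : seq (seq term * term * term * term * seq term) := [::
  ([::], (B (B (V 0) (V 1)) (V 2)), (V 3), (V 4), [::]);
  ([::], (B (B (V 0) (V 1)) (V 2)), (V 4), (V 3), [::]);
  ([::], (B (B (V 0) (V 1)) (V 3)), (V 2), (V 4), [::]);
  ([::], (B (B (V 0) (V 1)) (V 4)), (V 2), (V 3), [::]);
  ([::], (B (V 0) (V 1)), (V 2), (B (V 3) (V 4)), [::]);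
  ([::], (B (B (V 0) (V 1)) (V 3)), (V 4), (V 2), [::]);
  ([::], (B (B (V 0) (V 1)) (V 4)), (V 3), (V 2), [::]);
  ([::], (B (V 0) (V 1)), (B (V 3) (V 4)), (V 2), [::]);
  ([:: V 4], (B (V 0) (V 1)), (V 3), (V 2), [::]);
  ([:: V 3], (B (V 0) (V 1)), (V 4), (V 2), [::]);
  ([::], (B (V 0) (V 2)), (V 1), (B (V 3) (V 4)), [::]);
  ([:: V 4], (B (V 0) (V 2)), (V 1), (V 3), [::]);
  ([:: V 3], (B (V 0) (V 2)), (V 1), (V 4), [::]);
  ([::], (B (V 0) (V 3)), (B (V 1) (V 2)), (V 4), [::]);
  ([::], (B (V 0) (V 4)), (B (V 1) (V 2)), (V 3), [::]);
  ([::], (V 0), (B (V 1) (V 2)), (B (V 3) (V 4)), [::]);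
  ([::], (B (B (V 0) (V 3)) (V 4)), (V 1), (V 2), [::]);
  ([::], (B (B (V 0) (V 4)) (V 3)), (V 1), (V 2), [::]);
  ([:: V 4], (B (V 0) (V 3)), (V 1), (V 2), [::]);
  ([::], (V 0), (V 1), (B (B (V 2) (V 3)) (V 4)), [::]);
  ([::], (V 0), (V 1), (B (B (V 2) (V 4)) (V 3)), [::]);
  ([:: V 4], (V 0), (V 1), (B (V 2) (V 3)), [::]);
  ([:: V 3], (B (V 0) (V 4)), (V 1), (V 2), [::]);
  ([:: V 3], (V 0), (V 1), (B (V 2) (V 4)), [::]);
  ([:: V 2], (V 0), (B (V 1) (V 3)), (V 4), [::]);
  ([:: V 2], (V 0), (B (V 1) (V 4)), (V 3), [::]);
  ([::], (B (V 0) (V 2)), (B (V 3) (V 4)), (V 1), [::]);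
  ([:: V 4], (B (V 0) (V 2)), (V 3), (V 1), [::]);
  ([:: V 3], (B (V 0) (V 2)), (V 4), (V 1), [::]);
  ([::], (B (V 0) (V 3)), (B (V 2) (V 4)), (V 1), [::]);
  ([::], (B (V 0) (V 3)), (V 2), (B (V 1) (V 4)), [::]);
  ([:: V 4], (B (V 0) (V 3)), (V 2), (V 1), [::]);
  ([::], (B (V 0) (V 4)), (B (V 2) (V 3)), (V 1), [::]);
  ([::], (V 0), (B (B (V 2) (V 3)) (V 4)), (V 1), [::]);
  ([::], (V 0), (B (B (V 2) (V 4)) (V 3)), (V 1), [::]);
  ([:: V 4], (V 0), (B (V 2) (V 3)), (V 1), [::]);
  ([::], (B (V 0) (V 4)), (V 2), (B (V 1) (V 3)), [::]);
  ([:: V 3], (B (V 0) (V 4)), (V 2), (V 1), [::]);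
  ([:: V 3], (V 0), (B (V 2) (V 4)), (V 1), [::]);
  ([:: V 3; V 4], (V 0), (V 2), (V 1), [::]);
  ([:: V 4; V 3], (V 0), (V 2), (V 1), [::]);
  ([:: V 2], (B (V 0) (V 3)), (V 4), (V 1), [::]);
  ([:: V 2], (B (V 0) (V 4)), (V 3), (V 1), [::]);
  ([:: V 2], (V 0), (B (V 3) (V 4)), (V 1), [::])].

Definition bigw := expand target_ts ++ flatten [seq inst_words c | c <- cert].

Lemma cert_ok : cancw (sort lexle bigw) = [::].
Proof. by vm_compute. Qed.

Lemma brD1 (L : zmodType) (br : L -> L -> L) (hlie : is_lie_ring br) x y z :
  br (x + y) z = br x z + br y z.
Proof. by case: hlie. Qed.

Lemma brD2 (L : zmodType) (br : L -> L -> L) (hlie : is_lie_ring br) x y z :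
  br x (y + z) = br x y + br x z.
Proof. by case: hlie. Qed.

Lemma br0l (L : zmodType) (br : L -> L -> L) (hlie : is_lie_ring br) z : br 0 z = 0.
Proof.
by apply: (@addrI _ (br 0 z)); rewrite addr0 -(brD1 hlie) addr0.
Qed.

Lemma br_anti (L : zmodType) (br : L -> L -> L) (hlie : is_lie_ring br) x y :
  br x y = - br y x.
Proof.
case: (hlie) => _ _ hxx _.
have := hxx (x + y); rewrite (brD1 hlie) !(brD2 hlie) !hxx add0r addr0.
by move/eqP; rewrite addr_eq0 => /eqP.
Qed.

Lemma app_sum (L : zmodType) (br : L -> L -> L) (hlie : is_lie_ring br)
  (I : Type) (r : seq I) (F : I -> L) (s : seq L) :
  app br (\sum_(i <- r) F i) s = \sum_(i <- r) app br (F i) s.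
Proof.
rewrite /app; elim: s r F => [|a s IH] r F /=; first by [].
rewrite -IH; congr foldl.
elim: r => [|i r IHr]; first by rewrite !big_nil br0l.
by rewrite !big_cons (brD1 hlie) IHr.
Qed.

Lemma app0 (L : zmodType) (br : L -> L -> L) (hlie : is_lie_ring br) (s : seq L) :
  app br 0 s = 0.
Proof. by have := app_sum hlie [::] (fun _ : unit => 0) s; rewrite !big_nil. Qed.

Lemma appD (L : zmodType) (br : L -> L -> L) (hlie : is_lie_ring br) x y (s : seq L) :
  app br (x + y) s = app br x s + app br y s.
Proof.
have := app_sum hlie [:: true; false] (fun b => if b then x else y) s.
by rewrite !big_cons !big_nil !addr0.
Qed.

Lemma appw_cat (L : zmodType) (br : L -> L -> L) env v a b :
  appw br env v (a ++ b) = appw br env (appw br env v a) b.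
Proof. by rewrite /appw /app map_cat foldl_cat. Qed.

Lemma jac2 (L : zmodType) (br : L -> L -> L) (hlie : is_lie_ring br)
  (h2 : forall x : L, x + x = 0) v s u :
  br v (br s u) = br (br v s) u + br (br v u) s.
Proof.
have hN : forall x : L, - x = x.
  by move=> x; apply/eqP; rewrite eq_sym -subr_eq0 opprK h2.
case: (hlie) => _ _ _ hj.
have := hj v s u.
rewrite (br_anti hlie (br s u) v) hN (br_anti hlie u v) hN => /eqP.
rewrite (addrC (br (br v s) u)) -addrA addr_eq0 hN => /eqP ->.
by rewrite addrC.
Qed.

Lemma ops_ok (L : zmodType) (br : L -> L -> L) (hlie : is_lie_ring br)
  (h2 : forall x : L, x + x = 0) env t v :
  br v (den br env t) = \sum_(w <- ops t) appw br env v w.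
Proof.
elim: t v => [i|s IHs u IHu] v /=.
  by rewrite big_seq1.
rewrite jac2 // big_cat /=.
rewrite !big_allpairs_dep /=.
congr (_ + _).
  rewrite IHs (big_morph (fun x => br x (den br env u)) (fun x y => brD1 hlie x y _) (br0l hlie _)).
  apply: eq_bigr => a _; rewrite IHu; apply: eq_bigr => b _.
  by rewrite appw_cat.
rewrite IHu (big_morph (fun x => br x (den br env s)) (fun x y => brD1 hlie x y _) (br0l hlie _)).
apply: eq_bigr => a _; rewrite IHs; apply: eq_bigr => b _.
by rewrite appw_cat.
Qed.

Lemma expand_ok (L : zmodType) (br : L -> L -> L) (hlie : is_lie_ring br)
  (h2 : forall x : L, x + x = 0) env ts v :
  app br v (map (den br env) ts) = \sum_(w <- expand ts) appw br env v w.
Proof.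
elim: ts v => [|t ts IH] v /=; first by rewrite big_seq1.
rewrite big_allpairs_dep /=.
rewrite [LHS]/app /= -/(app br _ _) ops_ok // app_sum //.
apply: eq_bigr => a _; rewrite IH; apply: eq_bigr => b _.
by rewrite appw_cat.
Qed.

Lemma lin_cond (L : zmodType) (br : L -> L -> L) (hlie : is_lie_ring br)
  (hcond : forall u w v : L, br (br v u) (br u w) = 0) v u t w :
  br (br v u) (br t w) + br (br v t) (br u w) = 0.
Proof.
have := hcond (u + t) w v.
rewrite !(brD1 hlie, brD2 hlie) !hcond add0r addr0.
by [].
Qed.

Lemma inst_ok (L : zmodType) (br : L -> L -> L) (hlie : is_lie_ring br)
  (h2 : forall x : L, x + x = 0)
  (hcond : forall u w v : L, br (br v u) (br u w) = 0) env v c :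
  \sum_(w <- inst_words c) appw br env v w = 0.
Proof.
case: c => [[[[l U] T] W] r] /=.
rewrite big_cat -!expand_ok // !map_cat /app !foldl_cat /= -/(app br _ _) -/(app br _ _).
rewrite -appD //.
by rewrite lin_cond // app0.
Qed.

Lemma cancel_ok (L : zmodType) (F : seq nat -> L) (h2 : forall x : L, x + x = 0) s :
  \sum_(w <- cancw s) F w = \sum_(w <- s) F w.
Proof.
elim: s => [|a r IH] //=.
rewrite big_cons -IH.
case: (cancw r) => [|b r']; first by rewrite big_seq1 big_nil addr0.
case: eqP => [<-|_]; last by rewrite big_cons.
by rewrite big_cons addrA h2 add0r.
Qed.


Lemma insts_ok (L : zmodType) (br : L -> L -> L) (hlie : is_lie_ring br)
  (h2 : forall x : L, x + x = 0)
  (hcond : forall u w v : L, br (br v u) (br u w) = 0) env v cs :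
  \sum_(w <- flatten [seq inst_words c | c <- cs]) appw br env v w = 0.
Proof.
elim: cs => [|c cs IH]; first by rewrite big_nil.
rewrite (_ : flatten _ = inst_words c ++ flatten [seq inst_words c | c <- cs]) //.
rewrite big_cat IH inst_ok //; exact: addr0.
Qed.

Lemma core (L : zmodType) (br : L -> L -> L) (hlie : is_lie_ring br)
  (h2 : forall x : L, x + x = 0)
  (hcond : forall u w v : L, br (br v u) (br u w) = 0) v u t w x y :
  br (br (br v u) (br t w)) (br x y) = 0.
Proof.
pose env := [:: u; t; w; x; y].
have E : br (br (br v u) (br t w)) (br x y) = app br v (map (den br env) target_ts).
  by rewrite /app /target_ts /=.
rewrite E expand_ok //.
have H := cancel_ok (appw br env v) h2 (sort lexle bigw).
rewrite cert_ok big_nil in H.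
rewrite (perm_big _ (permEl (perm_sort lexle bigw))) in H.
rewrite /bigw big_cat insts_ok // in H.
move: H; move: (\sum_(w <- expand target_ts) appw br env v w) => S H.
exact: esym (etrans H (addr0 S)).
Qed.

Lemma br_oppl (L : zmodType) (br : L -> L -> L) (hlie : is_lie_ring br) x y :
  br (- x) y = - br x y.
Proof.
apply/eqP; rewrite -subr_eq0 opprK -(brD1 hlie) addNr br0l //.
Qed.

Lemma br0r (L : zmodType) (br : L -> L -> L) (hlie : is_lie_ring br) z : br z 0 = 0.
Proof. by rewrite (br_anti hlie) br0l // oppr0. Qed.

Lemma br_oppr (L : zmodType) (br : L -> L -> L) (hlie : is_lie_ring br) x y :
  br x (- y) = - br x y.
Proof.
apply/eqP; rewrite -subr_eq0 opprK -(brD2 hlie) addNr br0r //.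
Qed.

Lemma add_span_mono (L : zmodType) (P R : L -> Prop) x :
  (forall z, P z -> add_span R z) -> add_span P x -> add_span R x.
Proof.
move=> H; elim=> [z /H //| |z _ IH|z y _ IHz _ IHy].
- exact: add_span_0.
- exact: add_span_N.
- exact: add_span_D.
Qed.

Lemma add_span_br (L : zmodType) (br : L -> L -> L) (hlie : is_lie_ring br)
  (P Q R : L -> Prop) x y :
  (forall a b, P a -> Q b -> R (br a b)) -> add_span P x -> add_span Q y ->
  add_span R (br x y).
Proof.
move=> H hx hy; elim: hx => [a Pa| |a _ IH|a c _ IHa _ IHc].
- elim: hy => [b Qb| |b _ IH|b d _ IHb _ IHd].
  + by apply: add_span_base; apply: H.
  + by rewrite br0r //; apply: add_span_0.
  + by rewrite br_oppr //; apply: add_span_N.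
  + by rewrite (brD2 hlie); apply: add_span_D.
- by rewrite br0l //; apply: add_span_0.
- by rewrite br_oppl //; apply: add_span_N.
- by rewrite (brD1 hlie); apply: add_span_D.
Qed.

Lemma add_span_zero (L : zmodType) x : add_span (fun z : L => z = 0) x -> x = 0.
Proof.
elim=> [z //| //|z _ ->|z y _ -> _ ->]; by rewrite ?oppr0 ?addr0.
Qed.

Lemma two_f (L : zmodType) (br : L -> L -> L) (hlie : is_lie_ring br)
  (hcond : forall u w v : L, br (br v u) (br u w) = 0) a b c d :
  br (br a b) (br c d) + br (br a b) (br c d) = 0.
Proof.
have LC v u t w : br (br v u) (br t w) = - br (br v t) (br u w).
  by apply/eqP; rewrite -subr_eq0 opprK lin_cond.
have E1 : br (br a b) (br c d) = br (br c a) (br b d).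
  by rewrite LC (br_anti hlie a c) br_oppl // opprK.
have E2 : br (br c a) (br b d) = br (br c b) (br d a).
  by rewrite LC (br_anti hlie a d) br_oppr // opprK.
have E3 : br (br c b) (br d a) = br (br c d) (br a b).
  by rewrite LC (br_anti hlie b a) br_oppr // opprK.
have E4 : br (br c d) (br a b) = - br (br a b) (br c d).
  by rewrite (br_anti hlie).
by rewrite {1}E1 E2 E3 E4 addNr.
Qed.

Theorem lemma4p6 (L : zmodType) (br : L -> L -> L) (hlie : is_lie_ring br)
  (hcond : forall u w v : L, br (br v u) (br u w) = 0)
  (S : seq L) (hS : forall s, s \in S -> exists x y, s = br x y)
  (hgen : forall z : L, lie_gen br S z) :
  lie_nilpotent br.
Proof.
pose P1 := fun z : L => exists a b, z = br a b.
pose P2 := fun z : L => exists a b c d, z = br (br a b) (br c d).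
have D1 : forall z, add_span P1 z.
  move=> z; elim: (hgen z) => [s /hS [x [y ->]]| |x _ IH|x y _ IHx _ IHy|x y _ _ _ _].
  - by apply: add_span_base; exists x, y.
  - exact: add_span_0.
  - exact: add_span_N.
  - exact: add_span_D.
  - by apply: add_span_base; exists x, y.
have D2 : forall z, add_span P2 z.
  move=> z; apply: add_span_mono (D1 z) => _ [a [b ->]].
  apply: (add_span_br hlie (P := P1) (Q := P1)) (D1 a) (D1 b).
  by move=> p q [x [y ->]] [u [w ->]]; exists x, y, u, w.
have h2 : forall x : L, x + x = 0.
  move=> x; elim: (D2 x) => [z [a [b [c [d ->]]]]| |z _ IH|z y _ IHz _ IHy].
  - exact: two_f.
  - by rewrite addr0.
  - by rewrite -opprD IH oppr0.
  - by rewrite addrACA IHz IHy addr0.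
have B0 : forall p q, br p q = 0.
  move=> p q; apply: add_span_zero.
  apply: (add_span_br hlie (P := P2) (Q := P1)) (D2 p) (D1 q).
  by move=> r s [v [u [t [w ->]]]] [x [y ->]]; rewrite core.
have Z : forall z : L, z = 0.
  move=> z; apply: add_span_zero; apply: add_span_mono (D1 z) => _ [a [b ->]].
  by apply: add_span_base; rewrite B0.
by exists 0%N => x _; apply: Z.
Qed.
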